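(* Let $\mathcal S$ and $\Sigma$ be two finite fundamental systems, generating the groups $G$ and $\Gamma$ respectively. Assume there exist an orientation preserving homeomorphism $h:[0,1]\to[0,1]$ and a bijection $\varphi:\mathcal S\to\Sigma$, written $\varphi(f,S_f,I_f)=(\varphi(f),S_{\varphi(f)},I_{\varphi(f)})$, such that for every $(f,S_f,I_f)\in\mathcal S$ one has $S_{\varphi(f)}=h(S_f)$ and $I_{\varphi(f)}=h(I_f)$. Then there is a homeomorphism $\tilde h:[0,1]\to[0,1]$ such that $\tilde h f\tilde h^{-1}=\varphi(f)$ for every $(f,S_f,I_f)\in\mathcal S$; in particular $\Gamma=\{\tilde h g\tilde h^{-1}: g\in G\}$.
   Context: A homeomorphism $f$ of $[0,1]$ is simple if $[0,1]\setminus\mathrm{Fix}(f)$ has exactly one connected component; its closure is the support $S_f$ of $f$. It is positive if $f(x)\ge x$ for all $x$. A fundamental domain of a simple $f$ is a segment $[x,f(x)]$ with $x$ in the interior of $S_f$. A fundamental system is a family $\mathcal S$ of triples $(f,S_f,I_f)$ such that each $f$ is a simple positive homeomorphism of $[0,1]$, $S_f$ is its support and $I_f\subset S_f$ is a fundamental domain of $f$, and for any two distinct triples in $\mathcal S$: either $S_f$ and $S_g$ have disjoint interiors, or $S_f\subset I_g$, or $S_g\subset I_f$. *)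

(* Defs.v *)
From Stdlib Require Import Reals Lra List.
From Stdlib Require Export Reals List.
Open Scope R_scope.

(* Maps of [0,1] are represented as functions R -> R; only their values on
   [0,1] matter. *)
Definition in01 (x : R) : Prop := 0 <= x <= 1.

Definition cont01 (f : R -> R) : Prop :=
  forall x, in01 x -> forall eps, eps > 0 ->
    exists delta, delta > 0 /\
      forall y, in01 y -> Rabs (y - x) < delta -> Rabs (f y - f x) < eps.

Definition homeo01 (f : R -> R) : Prop :=
  (forall x, in01 x -> in01 (f x)) /\ cont01 f /\
  exists g : R -> R,
    (forall x, in01 x -> in01 (g x)) /\ cont01 g /\
    (forall x, in01 x -> g (f x) = x) /\
    (forall x, in01 x -> f (g x) = x).

Definition or_pres_homeo01 (h : R -> R) : Prop :=
  homeo01 h /\ forall x y, in01 x -> in01 y -> x < y -> h x < h y.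

Definition nonfix (f : R -> R) (x : R) : Prop := in01 x /\ f x <> x.

(* a subset of R is connected iff it is an interval (convex) *)
Definition connectedR (U : R -> Prop) : Prop :=
  forall x y z, U x -> U y -> x <= z <= y -> U z.

(* f simple: [0,1] \ Fix(f) has exactly one connected component,
   i.e. it is nonempty and connected. *)
Definition simple01 (f : R -> R) : Prop :=
  homeo01 f /\ (exists x, nonfix f x) /\ connectedR (nonfix f).

Definition positive01 (f : R -> R) : Prop := forall x, in01 x -> x <= f x.

Definition closureR (U : R -> Prop) (x : R) : Prop :=
  forall eps, eps > 0 -> exists y, U y /\ Rabs (y - x) < eps.

(* A triple (f, S_f, I_f) with S_f = [sa, sb] and I_f = [ia, ib]. *)
Record triple := Triple {
  tf : R -> R;
  sa : R; sb : R;
  ia : R; ib : R }.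

Definition seg (a b x : R) : Prop := a <= x <= b.

Definition is_support (t : triple) : Prop :=
  forall x, closureR (nonfix (tf t)) x <-> seg (sa t) (sb t) x.

Definition is_fund_domain (t : triple) : Prop :=
  sa t < ia t < sb t /\ ib t = tf t (ia t).

Definition good_triple (t : triple) : Prop :=
  simple01 (tf t) /\ positive01 (tf t) /\ is_support t /\ is_fund_domain t.

Definition seg_sub (a b c d : R) : Prop :=
  forall x, seg a b x -> seg c d x.

Definition disj_int (a b c d : R) : Prop :=
  forall x, ~ (a < x < b /\ c < x < d).

Definition fund_system {Idx : Type} (T : Idx -> triple) : Prop :=
  (forall i, good_triple (T i)) /\
  forall i j, i <> j ->
    disj_int (sa (T i)) (sb (T i)) (sa (T j)) (sb (T j)) \/
    seg_sub (sa (T i)) (sb (T i)) (ia (T j)) (ib (T j)) \/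
    seg_sub (sa (T j)) (sb (T j)) (ia (T i)) (ib (T i)).

Definition finite_type (A : Type) : Prop := exists l : list A, forall a, In a l.

Definition bijective_map {A B : Type} (f : A -> B) : Prop :=
  (forall x y, f x = f y -> x = y) /\ (forall y, exists x, f x = y).

Definition image_seg (h : R -> R) (a b y : R) : Prop :=
  exists x, seg a b x /\ h x = y.

(* The group generated by the maps F i (as maps of [0,1], i.e. up to
   equality on [0,1]). *)
Inductive gen {Idx : Type} (F : Idx -> R -> R) : (R -> R) -> Prop :=
| gen_id : gen F (fun x => x)
| gen_ext : forall g g', gen F g -> (forall x, in01 x -> g x = g' x) -> gen F g'
| gen_mul : forall i g, gen F g -> gen F (fun x => F i (g x))
| gen_inv : forall i g g', gen F g ->
    (forall x, in01 x -> in01 (g' x) /\ F i (g' x) = g x) -> gen F g'.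

(* Main.v *)
Require Import Defs.
From Stdlib Require Import Reals List Lra Lia ZArith Classical ClassicalEpsilon.
Open Scope R_scope.

Definition incr01 (f : R -> R) := forall x y, in01 x -> in01 y -> x < y -> f x < f y.
Definition maps01 (f : R -> R) := forall x, in01 x -> in01 (f x).
Definition onto01 (f : R -> R) := forall w, in01 w -> exists x, in01 x /\ f x = w.

Lemma incr01_le f x y : incr01 f -> in01 x -> in01 y -> x <= y -> f x <= f y.
Proof. intros Hf Hx Hy Hxy. destruct (Req_dec x y). subst; lra. left; apply Hf; auto; lra. Qed.

Lemma incr01_lt_rev f x y : incr01 f -> in01 x -> in01 y -> f x < f y -> x < y.
Proof. intros Hf Hx Hy H. destruct (Rlt_le_dec x y); auto.
  assert (f y <= f x) by (apply incr01_le; auto). lra. Qed.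

Lemma incr01_le_rev f x y : incr01 f -> in01 x -> in01 y -> f x <= f y -> x <= y.
Proof. intros Hf Hx Hy H. destruct (Rle_lt_dec x y); auto.
  assert (f y < f x) by (apply Hf; auto). lra. Qed.

Lemma incr01_inj f x y : incr01 f -> in01 x -> in01 y -> f x = f y -> x = y.
Proof. intros. apply Rle_antisym; apply (incr01_le_rev f); auto; lra. Qed.

Lemma mono_cont f : incr01 f -> maps01 f -> onto01 f -> cont01 f.
Proof.
  intros Hi Hm Ho x Hx eps Heps.
  assert (Hfx := Hm x Hx). unfold in01 in Hfx.
  destruct (Ho (Rmax 0 (f x - eps/2))) as [x1 [Hx1 E1]].
  { unfold in01, Rmax; destruct Rle_dec; lra. }
  destruct (Ho (Rmin 1 (f x + eps/2))) as [x2 [Hx2 E2]].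
  { unfold in01, Rmin; destruct Rle_dec; lra. }
  assert (L1 : x1 <= x). { apply (incr01_le_rev f); auto. rewrite E1.
    unfold Rmax; destruct Rle_dec; lra. }
  assert (L2 : x <= x2). { apply (incr01_le_rev f); auto. rewrite E2.
    unfold Rmin; destruct Rle_dec; lra. }
  exists (Rmin (if Rlt_dec x1 x then x - x1 else 1) (if Rlt_dec x x2 then x2 - x else 1)).
  split. { unfold Rmin; destruct (Rlt_dec x1 x); destruct (Rlt_dec x x2); destruct Rle_dec; lra. }
  intros y Hy Hd.
  assert (Hd1 : Rabs (y - x) < (if Rlt_dec x1 x then x - x1 else 1))
    by (eapply Rlt_le_trans; [exact Hd| apply Rmin_l]).
  assert (Hd2 : Rabs (y - x) < (if Rlt_dec x x2 then x2 - x else 1))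
    by (eapply Rlt_le_trans; [exact Hd| apply Rmin_r]).
  clear Hd.
  assert (Hfy := Hm y Hy). unfold in01 in Hfy.
  apply Rabs_def1.
  - destruct (Rle_lt_dec y x).
    + assert (f y <= f x) by (apply incr01_le; auto). lra.
    + destruct (Rlt_dec x x2).
      * apply Rabs_def2 in Hd2.
        assert (f y < f x2) by (apply Hi; auto; lra).
        rewrite E2 in H. unfold Rmin in H; destruct Rle_dec; lra.
      * assert (x = x2) by lra. subst x2.
        revert E2; unfold Rmin; destruct Rle_dec; intros; lra.
  - destruct (Rle_lt_dec x y).
    + assert (f x <= f y) by (apply incr01_le; auto). lra.
    + destruct (Rlt_dec x1 x).
      * apply Rabs_def2 in Hd1.
        assert (f x1 < f y) by (apply Hi; auto; lra).
        rewrite E1 in H. unfold Rmax in H; destruct Rle_dec; lra.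
      * assert (x = x1) by lra. subst x1.
        revert E1; unfold Rmax; destruct Rle_dec; intros; lra.
Qed.

Lemma incr_homeo f : incr01 f -> maps01 f -> onto01 f -> homeo01 f.
Proof.
  intros Hi Hm Ho.
  set (g := fun w => epsilon (inhabits 0) (fun x => in01 x /\ f x = w)).
  assert (Hg : forall w, in01 w -> in01 (g w) /\ f (g w) = w).
  { intros w Hw. unfold g. apply epsilon_spec. apply Ho; auto. }
  assert (Hgf : forall x, in01 x -> g (f x) = x).
  { intros x Hx. destruct (Hg (f x) (Hm x Hx)). apply (incr01_inj f); auto. }
  assert (Hgm : maps01 g) by (intros w Hw; apply Hg; auto).
  assert (Hgi : incr01 g).
  { intros w1 w2 H1 H2 H12. apply (incr01_lt_rev f); auto.
    rewrite (proj2 (Hg w1 H1)), (proj2 (Hg w2 H2)); auto. }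
  assert (Hgo : onto01 g) by (intros x Hx; exists (f x); split; auto).
  split; [auto|]. split; [apply mono_cont; auto|].
  exists g. split; [auto|]. split; [apply mono_cont; auto|].
  split; auto. intros x Hx; apply Hg; auto.
Qed.

Definition cl (x : R) := Rmax 0 (Rmin 1 x).
Lemma cl_in01 x : in01 (cl x).
Proof. unfold cl, in01, Rmax, Rmin; repeat destruct Rle_dec; lra. Qed.
Lemma cl_id x : in01 x -> cl x = x.
Proof. unfold cl, in01, Rmax, Rmin; intros; repeat destruct Rle_dec; lra. Qed.
Lemma cl_lip s t : Rabs (cl s - cl t) <= Rabs (s - t).
Proof. unfold cl, Rmax, Rmin; repeat destruct Rle_dec; unfold Rabs;
  repeat destruct Rcase_abs; lra. Qed.

Lemma cont_ext f c : cont01 f -> continuity (fun t => f (cl t) - c).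
Proof.
  intros Hc t. unfold continuity_pt, continue_in, limit1_in, limit_in; simpl; unfold R_dist.
  intros eps Heps. destruct (Hc (cl t) (cl_in01 t) eps Heps) as [d [Hd H]].
  exists d; split; auto. intros s [_ Hs].
  replace (f (cl s) - c - (f (cl t) - c)) with (f (cl s) - f (cl t)) by ring.
  apply H; [apply cl_in01| eapply Rle_lt_trans; [apply cl_lip | exact Hs]].
Qed.

Lemma pos_homeo_incr f : homeo01 f -> positive01 f -> incr01 f /\ f 0 = 0.
Proof.
  intros [Hm [Hc [g [Hgm [Hgc [Hgf Hfg]]]]]] Hp.
  assert (H0 : in01 0) by (unfold in01; lra).
  assert (Hf0 : f 0 = 0).
  { assert (Hg0 := Hgm 0 H0). assert (Hp0 := Hp (g 0) Hg0). rewrite Hfg in Hp0 by auto.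
    assert (g 0 = 0) by (unfold in01 in Hg0; lra). rewrite <- H at 1. apply Hfg; auto. }
  split; auto.
  intros x y Hx Hy Hxy.
  destruct (Rlt_le_dec (f x) (f y)) as [|Hle]; auto. exfalso.
  assert (Hpy := Hp y Hy).
  destruct Hle as [Hlt|Heq].
  - destruct (Req_dec x 0).
    + subst. unfold in01 in *. lra.
    + destruct (IVT (fun t => f (cl t) - f y) 0 x (cont_ext f (f y) Hc)) as [z [Hz Hfz]].
      { unfold in01 in *; lra. }
      { cbv beta. rewrite cl_id by auto. unfold in01 in *. lra. }
      { cbv beta; rewrite cl_id by auto. unfold in01 in *. lra. }
      assert (Hz01 : in01 z) by (unfold in01 in *; lra).
      rewrite cl_id in Hfz by auto.
      assert (z = y). { rewrite <- (Hgf z), <- (Hgf y) by auto. f_equal. lra. }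
      lra.
  - assert (x = y) by (rewrite <- (Hgf x), <- (Hgf y) by auto; f_equal; auto). lra.
Qed.

Record SD (f g : R -> R) (a b x0 : R) : Prop := {
  sd_fm : maps01 f; sd_gm : maps01 g;
  sd_fi : incr01 f; sd_gi : incr01 g;
  sd_gf : forall x, in01 x -> g (f x) = x;
  sd_fg : forall x, in01 x -> f (g x) = x;
  sd_fc : cont01 f; sd_gc : cont01 g;
  sd_ab : 0 <= a /\ a < x0 /\ x0 < b /\ b <= 1;
  sd_fix : forall x, in01 x -> (x <= a \/ b <= x) -> f x = x;
  sd_pos : forall x, a < x -> x < b -> x < f x }.

Lemma closure_in01 f x : closureR (nonfix f) x -> in01 x.
Proof.
  intros H. unfold in01. split.
  - apply Rnot_lt_le; intro Hx. destruct (H (-x)) as [y [[Hy _] Hd]]; [lra|].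
    unfold in01 in Hy. unfold Rabs in Hd; destruct Rcase_abs in Hd; lra.
  - apply Rnot_lt_le; intro Hx. destruct (H (x-1)) as [y [[Hy _] Hd]]; [lra|].
    unfold in01 in Hy. unfold Rabs in Hd; destruct Rcase_abs in Hd; lra.
Qed.

Lemma good_SD t : good_triple t -> exists g, SD (tf t) g (sa t) (sb t) (ia t).
Proof.
  intros [[Hh [_ Hconn]] [Hp [Hsupp [Hfd _]]]].
  unfold is_support in Hsupp.
  set (f := tf t) in *. set (a := sa t) in *. set (b := sb t) in *.
  assert (Hh' := Hh). destruct Hh' as [Hm [Hc [g [Hgm [Hgc [Hgf Hfg]]]]]].
  destruct (pos_homeo_incr f Hh Hp) as [Hi Hf0].
  assert (Ha : in01 a) by (apply (closure_in01 f); apply Hsupp; unfold seg; lra).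
  assert (Hb : in01 b) by (apply (closure_in01 f); apply Hsupp; unfold seg; lra).
  assert (Hnf : forall x, nonfix f x -> a <= x <= b).
  { intros x Hx. apply Hsupp. intros e He. exists x. split; auto.
    replace (x - x) with 0 by ring. rewrite Rabs_R0. lra. }
  exists g. constructor; auto.
  - intros w1 w2 H1 H2 H12. apply (incr01_lt_rev f); auto. rewrite !Hfg; auto.
  - unfold in01 in *. lra.
  - intros x Hx Hout. apply NNPP; intro Hne.
    assert (Hx' := Hnf x (conj Hx Hne)).
    destruct Hout as [Hout|Hout].
    + assert (x = a) by lra. subst x.
      destruct (Req_dec a 0) as [Ha0|Ha0].
      { apply Hne. rewrite Ha0. auto. }
      set (d := Rabs (f a - a)).
      assert (Hd : d > 0) by (unfold d; apply Rabs_pos_lt; lra).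
      destruct (Hc a Ha (d/2)) as [del [Hdel Hcd]]; [lra|].
      set (e := Rmin (Rmin del (d/2)) a / 2).
      assert (He : 0 < e /\ e < del /\ e < d/2 /\ e <= a/2).
      { unfold e, Rmin. unfold in01 in Ha. repeat destruct Rle_dec; lra. }
      assert (Hy : in01 (a - e)) by (unfold in01 in *; lra).
      assert (Hnfy : nonfix f (a - e)).
      { split; auto. intro Hfy. 
        assert (Hr : Rabs (a - e - a) < del) by (unfold Rabs; destruct Rcase_abs; lra).
        specialize (Hcd _ Hy Hr). rewrite Hfy in Hcd. unfold d in *.
        clear -Hcd He; revert Hcd He; unfold Rabs; repeat destruct Rcase_abs; intros; lra. }
      apply Hnf in Hnfy. lra.
    + assert (x = b) by lra. subst x.
      destruct (Req_dec b 1) as [Hb1|Hb1].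
      { apply Hne. rewrite Hb1 in *. assert (Hq := Hp 1 Hx). assert (Hq2 := Hm 1 Hx).
        unfold in01 in Hq2. lra. }
      set (d := Rabs (f b - b)).
      assert (Hd : d > 0) by (unfold d; apply Rabs_pos_lt; lra).
      destruct (Hc b Hb (d/2)) as [del [Hdel Hcd]]; [lra|].
      set (e := Rmin (Rmin del (d/2)) (1 - b) / 2).
      assert (He : 0 < e /\ e < del /\ e < d/2 /\ e <= (1 - b)/2).
      { unfold e, Rmin. unfold in01 in Hb. repeat destruct Rle_dec; lra. }
      assert (Hy : in01 (b + e)) by (unfold in01 in *; lra).
      assert (Hnfy : nonfix f (b + e)).
      { split; auto. intro Hfy. 
        assert (Hr : Rabs (b + e - b) < del) by (unfold Rabs; destruct Rcase_abs; lra).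
        specialize (Hcd _ Hy Hr). rewrite Hfy in Hcd. unfold d in *.
        clear -Hcd He; revert Hcd He; unfold Rabs; repeat destruct Rcase_abs; intros; lra. }
      apply Hnf in Hnfy. lra.
  - intros x Hax Hxb.
    assert (Hx : in01 x) by (unfold in01 in *; lra).
    assert (Ca : closureR (nonfix f) a) by (apply Hsupp; unfold seg; lra).
    assert (Cb : closureR (nonfix f) b) by (apply Hsupp; unfold seg; lra).
    destruct (Ca (x - a)) as [y [Hy Hya]]; [lra|].
    destruct (Cb (b - x)) as [z [Hz Hzb]]; [lra|].
    assert (Hy' := Hnf y Hy). assert (Hz' := Hnf z Hz).
    assert (y <= x) by (revert Hya; unfold Rabs; destruct Rcase_abs; intros; lra).
    assert (x <= z) by (revert Hzb; unfold Rabs; destruct Rcase_abs; intros; lra).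
    destruct (Hconn y z x Hy Hz) as [_ Hne]; [lra|].
    assert (Hpx := Hp x Hx). destruct Hpx; auto. exfalso; auto.
Qed.

Lemma sd_in01 f g a b x0 : SD f g a b x0 -> in01 a /\ in01 b /\ in01 x0.
Proof. intros H. destruct (sd_ab _ _ _ _ _ H). unfold in01; lra. Qed.

Lemma sd_ab_in01 f g a b x0 x : SD f g a b x0 -> a < x < b -> in01 x.
Proof. intros H Hx. destruct (sd_ab _ _ _ _ _ H). unfold in01; lra. Qed.

Lemma sd_fab f g a b x0 x : SD f g a b x0 -> a < x < b -> a < f x < b.
Proof.
  intros H Hx. destruct (sd_in01 _ _ _ _ _ H) as [Ha [Hb _]].
  assert (Hx01 := sd_ab_in01 _ _ _ _ _ _ H Hx).
  assert (x < f x) by (apply (sd_pos _ _ _ _ _ H); lra).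
  assert (f x < f b) by (apply (sd_fi _ _ _ _ _ H); auto; lra).
  rewrite (sd_fix _ _ _ _ _ H b) in H1 by (auto; lra). lra.
Qed.

Lemma sd_out f g a b x0 x : SD f g a b x0 -> in01 x -> ~ (a < x < b) -> f x = x.
Proof. intros H Hx Hn. apply (sd_fix _ _ _ _ _ H); auto. lra. Qed.

Lemma sd_gout f g a b x0 x : SD f g a b x0 -> in01 x -> ~ (a < x < b) -> g x = x.
Proof. intros H Hx Hn. rewrite <- (sd_out f g a b x0 x) at 1; auto. apply (sd_gf _ _ _ _ _ H); auto. Qed.

Lemma sd_fmono f g a b x0 x y : SD f g a b x0 -> in01 x -> in01 y -> x <= y -> f x <= f y.
Proof. intros H; apply incr01_le; apply (sd_fi _ _ _ _ _ H). Qed.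

Lemma sd_gab f g a b x0 x : SD f g a b x0 -> a < x < b -> a < g x < b /\ g x < x.
Proof.
  intros H Hx. destruct (sd_in01 _ _ _ _ _ H) as [Ha [Hb _]].
  assert (Hx01 := sd_ab_in01 _ _ _ _ _ _ H Hx).
  assert (Hg := sd_gm _ _ _ _ _ H x Hx01).
  assert (g a < g x) by (apply (sd_gi _ _ _ _ _ H); auto; lra).
  rewrite (sd_gout f g a b x0 a) in H0 by (auto; lra).
  assert (g x < x).
  { destruct (Rlt_le_dec (g x) x); auto.
    assert (Hfgx := sd_fg _ _ _ _ _ H x Hx01).
    destruct (Rlt_le_dec (g x) b).
    - assert (Hp := sd_pos _ _ _ _ _ H (g x) ltac:(lra) r0). lra.
    - assert (Hq := sd_fmono f g a b x0 b (g x) H Hb Hg r0).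
      rewrite (sd_fix _ _ _ _ _ H b) in Hq by (auto; lra). lra. }
  lra.
Qed.

Lemma iter_in01 F k x : maps01 F -> in01 x -> in01 (Nat.iter k F x).
Proof. intros HF Hx. induction k; simpl; auto. Qed.

Lemma iter_incr F k x y : maps01 F -> incr01 F -> in01 x -> in01 y -> x < y ->
  Nat.iter k F x < Nat.iter k F y.
Proof. intros HF Hi Hx Hy Hxy. induction k; simpl; auto.
  apply Hi; auto; apply iter_in01; auto. Qed.

Lemma escape (F : R -> R) (u0 y : R) :
  cont01 F -> maps01 F -> in01 u0 -> y <= 1 ->
  (forall z, u0 <= z <= y -> F z > z) ->
  exists k, Nat.iter k F u0 > y.
Proof.
  intros Hc Hm Hu Hy Hpos.
  apply NNPP; intro Hn.
  assert (Hall : forall k, Nat.iter k F u0 <= y).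
  { intro k. apply Rnot_lt_le. intro Hk. apply Hn. exists k. lra. }
  assert (Hin : forall k, in01 (Nat.iter k F u0)) by (intro k; apply iter_in01; auto).
  assert (Hge : forall k, u0 <= Nat.iter k F u0).
  { induction k. simpl; lra. simpl.
    specialize (Hpos (Nat.iter k F u0) (conj IHk (Hall k))). lra. }
  destruct (completeness (fun z => exists k, z = Nat.iter k F u0)) as [l [Hub Hlub]].
  { exists y. intros z [k ->]. apply Hall. }
  { exists u0. exists 0%nat. reflexivity. }
  assert (Hl1 : u0 <= l) by (apply Hub; exists 0%nat; reflexivity).
  assert (Hl2 : l <= y).
  { apply Hlub. intros z [k ->]. apply Hall. }
  assert (Hl01 : in01 l) by (unfold in01 in *; lra).
  assert (HFl := Hpos l (conj Hl1 Hl2)).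
  destruct (Hc l Hl01 (F l - l)) as [d [Hd Hcd]]; [lra|].
  assert (exists k, l - d < Nat.iter k F u0) as [k Hk].
  { apply NNPP; intro Hn2. assert (l <= l - d). apply Hlub. intros z [k ->].
    apply Rnot_lt_le. intro. apply Hn2. exists k; auto. lra. }
  assert (Hkl : Nat.iter k F u0 <= l) by (apply Hub; exists k; reflexivity).
  assert (HS : Nat.iter (S k) F u0 <= l) by (apply Hub; exists (S k); reflexivity).
  simpl in HS.
  specialize (Hcd (Nat.iter k F u0) (Hin k)).
  assert (Rabs (Nat.iter k F u0 - l) < d) by (unfold Rabs; destruct Rcase_abs; lra).
  specialize (Hcd H). revert Hcd; unfold Rabs; destruct Rcase_abs; intros; lra.
Qed.

Lemma cont01_reflect g : cont01 g -> cont01 (fun z => 1 - g (1 - z)).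
Proof.
  intros Hc x Hx eps Heps.
  assert (Hx' : in01 (1 - x)) by (unfold in01 in *; lra).
  destruct (Hc (1 - x) Hx' eps Heps) as [d [Hd H]].
  exists d; split; auto. intros y Hy Hyx.
  assert (Hy' : in01 (1 - y)) by (unfold in01 in *; lra).
  replace (1 - g (1 - y) - (1 - g (1 - x))) with (- (g (1 - y) - g (1 - x))) by ring.
  rewrite Rabs_Ropp. apply H; auto.
  replace (1 - y - (1 - x)) with (- (y - x)) by ring. rewrite Rabs_Ropp; auto.
Qed.

Lemma escape_f f g a b x0 y : SD f g a b x0 -> x0 <= y < b ->
  exists k, Nat.iter k f x0 > y.
Proof.
  intros H Hy. destruct (sd_ab _ _ _ _ _ H) as [H1 [H2 [H3 H4]]].
  apply escape.
  - apply (sd_fc _ _ _ _ _ H).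
  - apply (sd_fm _ _ _ _ _ H).
  - unfold in01; lra.
  - lra.
  - intros z Hz. apply (sd_pos _ _ _ _ _ H); lra.
Qed.

Lemma escape_g f g a b x0 y : SD f g a b x0 -> a < y <= x0 ->
  exists k, Nat.iter k g x0 < y.
Proof.
  intros H Hy. destruct (sd_ab _ _ _ _ _ H) as [H1 [H2 [H3 H4]]].
  set (G := fun z => 1 - g (1 - z)).
  assert (HG : forall k, Nat.iter k G (1 - x0) = 1 - Nat.iter k g x0).
  { induction k; simpl; auto. rewrite IHk. unfold G. f_equal. f_equal. ring. }
  destruct (escape G (1 - x0) (1 - y)) as [k Hk].
  - apply cont01_reflect, (sd_gc _ _ _ _ _ H).
  - intros z Hz. unfold G. assert (in01 (1 - z)) by (unfold in01 in *; lra).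
    assert (Hq := sd_gm _ _ _ _ _ H (1 - z) H0). unfold in01 in *; lra.
  - unfold in01; lra.
  - lra.
  - intros z Hz. unfold G.
    destruct (sd_gab f g a b x0 (1 - z) H) as [_ Hl]; [lra|]. lra.
  - exists k. rewrite HG in Hk. lra.
Qed.

Definition E (f g : R -> R) (n : Z) (x : R) : R :=
  if Z_le_dec 0 n then Nat.iter (Z.to_nat n) f x else Nat.iter (Z.to_nat (- n)) g x.

Lemma E_0 f g x : E f g 0 x = x.
Proof. unfold E. destruct Z_le_dec; [reflexivity| lia]. Qed.

Lemma E_in01 f g a b x0 n x : SD f g a b x0 -> in01 x -> in01 (E f g n x).
Proof. intros H Hx. unfold E. destruct Z_le_dec; apply iter_in01; auto;
  [apply (sd_fm _ _ _ _ _ H) | apply (sd_gm _ _ _ _ _ H)]. Qed.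

Lemma E_succ f g a b x0 n x : SD f g a b x0 -> in01 x -> E f g (n + 1) x = f (E f g n x).
Proof.
  intros H Hx. unfold E.
  destruct (Z_le_dec 0 (n+1)); destruct (Z_le_dec 0 n).
  - replace (Z.to_nat (n+1)) with (S (Z.to_nat n)) by lia. reflexivity.
  - assert (n = (-1)%Z) by lia. subst. simpl. symmetry. apply (sd_fg _ _ _ _ _ H); auto.
  - lia.
  - replace (Z.to_nat (- n)) with (S (Z.to_nat (- (n + 1)))) by lia. simpl.
    symmetry. apply (sd_fg _ _ _ _ _ H). apply iter_in01; auto. apply (sd_gm _ _ _ _ _ H).
Qed.

Lemma E_pred f g a b x0 n x : SD f g a b x0 -> in01 x -> E f g (n - 1) x = g (E f g n x).
Proof.
  intros H Hx. assert (Hs := E_succ f g a b x0 (n - 1) x H Hx).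
  replace (n - 1 + 1)%Z with n in Hs by ring. rewrite Hs.
  symmetry. apply (sd_gf _ _ _ _ _ H). apply (E_in01 f g a b x0); auto.
Qed.

Lemma E_add f g a b x0 m n x : SD f g a b x0 -> in01 x ->
  E f g (m + n) x = E f g m (E f g n x).
Proof.
  intros H Hx. assert (Hy := E_in01 f g a b x0 n x H Hx).
  induction m using Z.peano_ind.
  - rewrite E_0. reflexivity.
  - replace (Z.succ m + n)%Z with ((m + n) + 1)%Z by lia.
    replace (Z.succ m) with (m + 1)%Z by lia.
    rewrite (E_succ f g a b x0 (m + n)) by auto. rewrite (E_succ f g a b x0 m) by auto.
    rewrite IHm; auto.
  - replace (Z.pred m + n)%Z with ((m + n) - 1)%Z by lia.
    replace (Z.pred m) with (m - 1)%Z by lia.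
    rewrite (E_pred f g a b x0 (m + n)) by auto. rewrite (E_pred f g a b x0 m) by auto.
    rewrite IHm; auto.
Qed.

Lemma E_incr f g a b x0 n x y : SD f g a b x0 -> in01 x -> in01 y -> x < y ->
  E f g n x < E f g n y.
Proof.
  intros H Hx Hy Hxy. induction n using Z.peano_ind.
  - rewrite !E_0; auto.
  - replace (Z.succ n) with (n + 1)%Z by lia.
    rewrite !(E_succ f g a b x0 n) by auto. apply (sd_fi _ _ _ _ _ H); auto;
    apply (E_in01 f g a b x0); auto.
  - replace (Z.pred n) with (n - 1)%Z by lia.
    rewrite !(E_pred f g a b x0 n) by auto. apply (sd_gi _ _ _ _ _ H); auto;
    apply (E_in01 f g a b x0); auto.
Qed.

Lemma E_le f g a b x0 n x y : SD f g a b x0 -> in01 x -> in01 y -> x <= y ->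
  E f g n x <= E f g n y.
Proof. intros H Hx Hy Hxy. destruct (Req_dec x y). subst; lra.
  left; apply (E_incr f g a b x0); auto; lra. Qed.

Lemma E_ab f g a b x0 n x : SD f g a b x0 -> a < x < b -> a < E f g n x < b.
Proof.
  intros H Hx. assert (Hx01 := sd_ab_in01 _ _ _ _ _ _ H Hx).
  induction n using Z.peano_ind.
  - rewrite E_0; auto.
  - replace (Z.succ n) with (n + 1)%Z by lia.
    rewrite (E_succ f g a b x0 n) by auto. apply (sd_fab f g a b x0); auto.
  - replace (Z.pred n) with (n - 1)%Z by lia.
    rewrite (E_pred f g a b x0 n) by auto. apply (sd_gab f g a b x0); auto.
Qed.

Lemma E_step f g a b x0 n : SD f g a b x0 -> E f g n x0 < E f g (n + 1) x0.
Proof.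
  intros H. destruct (sd_ab _ _ _ _ _ H) as [H1 [H2 [H3 H4]]].
  assert (Hx : a < x0 < b) by lra.
  rewrite (E_succ f g a b x0 n x0 H) by (apply (sd_ab_in01 f g a b x0); auto).
  assert (Hq := E_ab f g a b x0 n x0 H Hx).
  apply (sd_pos _ _ _ _ _ H); lra.
Qed.

Lemma E_mono f g a b x0 m n : SD f g a b x0 -> (m <= n)%Z -> E f g m x0 <= E f g n x0.
Proof.
  intros H Hmn.
  assert (Hk : forall k, E f g m x0 <= E f g (m + Z.of_nat k) x0).
  { induction k.
    - simpl. rewrite Z.add_0_r. lra.
    - rewrite Nat2Z.inj_succ. replace (m + Z.succ (Z.of_nat k))%Z with ((m + Z.of_nat k) + 1)%Z by lia.
      assert (Hs := E_step f g a b x0 (m + Z.of_nat k) H). lra. }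
  specialize (Hk (Z.to_nat (n - m))). rewrite Z2Nat.id in Hk by lia.
  replace (m + (n - m))%Z with n in Hk by ring. auto.
Qed.

Lemma E_mono_lt f g a b x0 m n : SD f g a b x0 -> (m < n)%Z -> E f g m x0 < E f g n x0.
Proof. intros H Hmn. assert (Hs := E_step f g a b x0 m H).
  assert (Hm := E_mono f g a b x0 (m + 1) n H ltac:(lia)). lra. Qed.

Lemma E_unique f g a b x0 n m y : SD f g a b x0 ->
  E f g n x0 <= y < E f g (n + 1) x0 -> E f g m x0 <= y < E f g (m + 1) x0 -> n = m.
Proof.
  intros H Hn Hm. destruct (Z.lt_total n m) as [Hl|[Hl|Hl]]; auto.
  - assert (Hq := E_mono f g a b x0 (n + 1) m H ltac:(lia)). lra.
  - assert (Hq := E_mono f g a b x0 (m + 1) n H ltac:(lia)). lra.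
Qed.

Lemma E_nat f g k x : E f g (Z.of_nat k) x = Nat.iter k f x.
Proof. unfold E. destruct Z_le_dec; [rewrite Nat2Z.id; auto | lia]. Qed.

Lemma E_negnat f g k x : E f g (- Z.of_nat k) x = Nat.iter k g x.
Proof. destruct k. simpl. apply E_0. unfold E. destruct Z_le_dec; [lia|].
  rewrite Z.opp_involutive, Nat2Z.id; auto. Qed.

Lemma discrete (s : Z -> R) y : forall k m, s m <= y -> y < s (m + Z.of_nat k)%Z ->
  exists n, s n <= y < s (n + 1)%Z.
Proof.
  induction k; intros m H1 H2.
  - simpl in H2. rewrite Z.add_0_r in H2. lra.
  - destruct (Rlt_le_dec y (s (m + 1)%Z)).
    + exists m; auto.
    + apply (IHk (m + 1)%Z); auto. replace (m + 1 + Z.of_nat k)%Z with (m + Z.of_nat (S k))%Z by lia. auto.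
Qed.

Lemma E_exists f g a b x0 y : SD f g a b x0 -> a < y < b ->
  exists n, E f g n x0 <= y < E f g (n + 1) x0.
Proof.
  intros H Hy.
  assert (HM : exists M, y < E f g M x0).
  { destruct (Rlt_le_dec y x0).
    - exists 0%Z. rewrite E_0; auto.
    - destruct (escape_f f g a b x0 y H) as [k Hk]; [lra|]. exists (Z.of_nat k). rewrite E_nat. lra. }
  assert (Hm : exists m, E f g m x0 <= y).
  { destruct (Rle_lt_dec x0 y).
    - exists 0%Z. rewrite E_0; auto.
    - destruct (escape_g f g a b x0 y H) as [k Hk]; [lra|]. exists (- Z.of_nat k)%Z. rewrite E_negnat. lra. }
  destruct HM as [M HM]. destruct Hm as [m Hm].
  assert (Hlt : (m < M)%Z).
  { destruct (Z_lt_le_dec m M); auto. assert (Hq := E_mono f g a b x0 M m H l). lra. }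
  apply (discrete (fun n => E f g n x0) y (Z.to_nat (M - m)) m); auto.
  rewrite Z2Nat.id by lia. replace (m + (M - m))%Z with M by ring. auto.
Qed.

Lemma E_f1 f g a b x0 x : SD f g a b x0 -> in01 x -> E f g 1 x = f x.
Proof. intros H Hx. replace 1%Z with (0 + 1)%Z by ring. rewrite (E_succ f g a b x0) by auto.
  rewrite E_0; auto. Qed.

Lemma E_inv1 f g a b x0 n y : SD f g a b x0 -> in01 y -> E f g n (E f g (- n) y) = y.
Proof. intros H Hy. rewrite <- (E_add f g a b x0) by auto. replace (n + - n)%Z with 0%Z by ring.
  apply E_0. Qed.

Lemma E_inv2 f g a b x0 n y : SD f g a b x0 -> in01 y -> E f g (- n) (E f g n y) = y.
Proof. intros H Hy. rewrite <- (E_add f g a b x0) by auto. replace (- n + n)%Z with 0%Z by ring.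
  apply E_0. Qed.

Lemma piece_ab f g a b x0 n y : SD f g a b x0 -> E f g n x0 <= y < E f g (n + 1) x0 -> a < y < b.
Proof.
  intros H Hy. destruct (sd_ab _ _ _ _ _ H) as [L1 [L2 [L3 L4]]].
  assert (H1 := E_ab f g a b x0 n x0 H ltac:(lra)).
  assert (H2 := E_ab f g a b x0 (n + 1) x0 H ltac:(lra)). lra.
Qed.

Lemma piece_back f g a b x0 n y : SD f g a b x0 -> E f g n x0 <= y < E f g (n + 1) x0 ->
  x0 <= E f g (- n) y < f x0.
Proof.
  intros H Hy. assert (Hab := piece_ab f g a b x0 n y H Hy).
  assert (Hy01 := sd_ab_in01 f g a b x0 y H Hab).
  destruct (sd_in01 _ _ _ _ _ H) as [_ [_ Hx0]].
  assert (Hn01 := E_in01 f g a b x0 n x0 H Hx0).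
  assert (Hn101 := E_in01 f g a b x0 (n + 1) x0 H Hx0).
  split.
  - rewrite <- (E_inv2 f g a b x0 n x0) at 1 by auto. apply (E_le f g a b x0); auto; lra.
  - assert (Hq : E f g (- n) (E f g (n + 1) x0) = f x0).
    { rewrite <- (E_add f g a b x0) by auto. replace (- n + (n + 1))%Z with 1%Z by ring.
      apply (E_f1 f g a b x0); auto. }
    rewrite <- Hq. apply (E_incr f g a b x0); auto; lra.
Qed.

Lemma piece_fwd f g a b x0 n z : SD f g a b x0 -> x0 <= z < f x0 ->
  E f g n x0 <= E f g n z < E f g (n + 1) x0.
Proof.
  intros H Hz. destruct (sd_in01 _ _ _ _ _ H) as [Ha [Hb Hx0]].
  destruct (sd_ab _ _ _ _ _ H) as [L1 [L2 [L3 L4]]].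
  assert (Hf := sd_fm _ _ _ _ _ H x0 Hx0).
  assert (Hz01 : in01 z) by (unfold in01 in *; lra).
  split.
  - apply (E_le f g a b x0); auto; lra.
  - assert (Hq : E f g n (f x0) = E f g (n + 1) x0).
    { rewrite <- (E_f1 f g a b x0) by auto. rewrite <- (E_add f g a b x0) by auto. reflexivity. }
    rewrite <- Hq. apply (E_incr f g a b x0); auto; lra.
Qed.

Lemma extend f g a b x0 f' g' a' b' x0' ht0 :
  SD f g a b x0 -> SD f' g' a' b' x0' ->
  maps01 ht0 -> incr01 ht0 -> onto01 ht0 ->
  ht0 a = a' -> ht0 b = b' -> ht0 x0 = x0' -> ht0 (f x0) = f' x0' ->
  exists ht, maps01 ht /\ incr01 ht /\ onto01 ht /\
    (forall y, in01 y -> ~ (a < y < b) -> ht y = ht0 y) /\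
    (forall y, x0 <= y < f x0 -> ht y = ht0 y) /\
    (forall y, in01 y -> ht (f y) = f' (ht y)).
Proof.
  intros H H' Hm Hi Ho Ea Eb Ex Efx.
  destruct (sd_in01 _ _ _ _ _ H) as [Ha [Hb Hx0]].
  destruct (sd_in01 _ _ _ _ _ H') as [Ha' [Hb' Hx0']].
  destruct (sd_ab _ _ _ _ _ H) as [L1 [L2 [L3 L4]]].
  destruct (sd_ab _ _ _ _ _ H') as [L1' [L2' [L3' L4']]].
  assert (Hfx0 := sd_fm _ _ _ _ _ H x0 Hx0).
  assert (Hfx0' := sd_fm _ _ _ _ _ H' x0' Hx0').
  assert (Hposx := sd_pos _ _ _ _ _ H x0 L2 L3).
  assert (Hposx' := sd_pos _ _ _ _ _ H' x0' L2' L3').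
  set (N := fun y => epsilon (inhabits 0%Z) (fun n => E f g n x0 <= y < E f g (n + 1) x0)).
  assert (HN : forall y, a < y < b -> E f g (N y) x0 <= y < E f g (N y + 1) x0).
  { intros y Hy. unfold N. apply epsilon_spec. apply (E_exists f g a b x0); auto. }
  assert (HNu : forall y n, a < y < b -> E f g n x0 <= y < E f g (n + 1) x0 -> N y = n).
  { intros y n Hy Hn. apply (E_unique f g a b x0 (N y) n y H); auto. }
  set (ht := fun y => if Rlt_dec a y then if Rlt_dec y b
              then E f' g' (N y) (ht0 (E f g (- N y) y)) else ht0 y else ht0 y).
  assert (Hout : forall y, ~ (a < y < b) -> ht y = ht0 y).
  { intros y Hy. unfold ht. destruct Rlt_dec; auto. destruct Rlt_dec; auto. exfalso; lra. }
  assert (Hin : forall y n, E f g n x0 <= y < E f g (n + 1) x0 ->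
     ht y = E f' g' n (ht0 (E f g (- n) y))).
  { intros y n Hn. assert (Hy := piece_ab f g a b x0 n y H Hn).
    unfold ht. destruct Rlt_dec; [|lra]. destruct Rlt_dec; [|lra].
    rewrite (HNu y n); auto. }
  assert (Hrange : forall y n, E f g n x0 <= y < E f g (n + 1) x0 ->
     E f' g' n x0' <= ht y < E f' g' (n + 1) x0').
  { intros y n Hn. rewrite (Hin y n Hn).
    destruct (piece_back f g a b x0 n y H Hn) as [P1 P2].
    assert (Hz : in01 (E f g (- n) y)) by (unfold in01 in *; lra).
    apply (piece_fwd f' g' a' b' x0'); auto. split.
    - rewrite <- Ex. apply incr01_le; auto.
    - rewrite <- Efx. apply Hi; auto. }
  assert (Hrange2 : forall y, a < y < b -> a' < ht y < b').
  { intros y Hy. apply (piece_ab f' g' a' b' x0' (N y)); auto. }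
  assert (E3 : forall y, x0 <= y < f x0 -> ht y = ht0 y).
  { intros y Hy. rewrite (Hin y 0%Z).
    - replace (- 0)%Z with 0%Z by ring. rewrite !E_0. auto.
    - rewrite E_0. replace (0 + 1)%Z with 1%Z by ring. rewrite (E_f1 f g a b x0) by auto. auto. }
  assert (Hmaps : maps01 ht).
  { intros y Hy. destruct (Rlt_dec a y); [destruct (Rlt_dec y b)|].
    - assert (Hq := Hrange2 y ltac:(lra)). unfold in01 in *; lra.
    - rewrite Hout by lra. auto.
    - rewrite Hout by lra. auto. }
  assert (Hout' : forall y, in01 y -> ~ (a < y < b) -> ~ (a' < ht0 y < b')).
  { intros y Hy Hn. destruct (Rle_lt_dec y a).
    - assert (ht0 y <= ht0 a) by (apply incr01_le; auto). lra.
    - assert (b <= y) by lra. assert (ht0 b <= ht0 y) by (apply incr01_le; auto). lra. }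
  exists ht. split; [exact Hmaps|]. split; [|split; [|split; [|split]]].
  -
    intros x y Hx Hy Hxy.
    destruct (Rlt_dec a x) as [ax|ax]; [destruct (Rlt_dec x b) as [xb|xb]|];
    (destruct (Rlt_dec a y) as [ay|ay]; [destruct (Rlt_dec y b) as [yb|yb]|]).
    + assert (Hnx := HN x ltac:(lra)). assert (Hny := HN y ltac:(lra)).
      destruct (Z.lt_total (N x) (N y)) as [Hl|[Hl|Hl]].
      * assert (Q1 := Hrange x _ Hnx). assert (Q2 := Hrange y _ Hny).
        assert (Q3 := E_mono f' g' a' b' x0' (N x + 1) (N y) H' ltac:(lia)). lra.
      * rewrite (Hin x _ Hnx), (Hin y _ Hny).
        destruct (piece_back f g a b x0 (N x) x H Hnx) as [P1 P2].
        destruct (piece_back f g a b x0 (N y) y H Hny) as [P3 P4].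
        rewrite Hl in P1, P2 |- *.
        apply (E_incr f' g' a' b' x0'); auto.
        { apply Hm; unfold in01 in *; lra. }
        { apply Hm; unfold in01 in *; lra. }
        apply Hi; try (unfold in01 in *; lra).
        apply (E_incr f g a b x0); auto.
      * assert (Q3 := E_mono f g a b x0 (N y + 1) (N x) H ltac:(lia)). lra.
    + assert (Q := Hrange2 x ltac:(lra)). rewrite (Hout y) by lra.
      assert (ht0 b <= ht0 y) by (apply incr01_le; auto; lra). lra.
    + lra.
    + lra.
    + rewrite (Hout x), (Hout y) by lra. auto.
    + lra.
    + assert (Q := Hrange2 y ltac:(lra)). rewrite (Hout x) by lra.
      assert (ht0 x <= ht0 a) by (apply incr01_le; auto; lra). lra.
    + rewrite (Hout x), (Hout y) by lra. auto.
    + rewrite (Hout x), (Hout y) by lra. auto.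
  -
    intros w Hw. destruct (Rlt_dec a' w); [destruct (Rlt_dec w b')|].
    + destruct (E_exists f' g' a' b' x0' w H' ltac:(lra)) as [n Hn].
      destruct (piece_back f' g' a' b' x0' n w H' Hn) as [P1 P2].
      assert (Hv : in01 (E f' g' (- n) w)) by (unfold in01 in *; lra).
      destruct (Ho _ Hv) as [z [Hz Ez]].
      assert (Hz1 : x0 <= z). { apply (incr01_le_rev ht0); auto. lra. }
      assert (Hz2 : z < f x0). { apply (incr01_lt_rev ht0); auto. lra. }
      assert (Hp := piece_fwd f g a b x0 n z H (conj Hz1 Hz2)).
      exists (E f g n z). split; [apply (E_in01 f g a b x0); auto|].
      rewrite (Hin _ n Hp). rewrite (E_inv2 f g a b x0) by auto. rewrite Ez.
      apply (E_inv1 f' g' a' b' x0'); auto.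
    + destruct (Ho _ Hw) as [z [Hz Ez]]. exists z. split; auto.
      rewrite Hout; auto. intro Hq.
      assert (ht0 z < ht0 b) by (apply Hi; auto; lra). lra.
    + destruct (Ho _ Hw) as [z [Hz Ez]]. exists z. split; auto.
      rewrite Hout; auto. intro Hq.
      assert (ht0 a < ht0 z) by (apply Hi; auto; lra). lra.
  - intros y Hy Hn. apply Hout; auto.
  - exact E3.
  -
    intros y Hy. destruct (Rlt_dec a y); [destruct (Rlt_dec y b)|].
    + assert (Hn := HN y ltac:(lra)). set (n := N y) in *.
      assert (Hf1 : E f g (n + 1) x0 <= f y < E f g (n + 1 + 1) x0).
      { split.
        - rewrite (E_succ f g a b x0 n x0 H Hx0). apply (sd_fmono f g a b x0); auto. apply (E_in01 f g a b x0); auto. lra.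
        - rewrite (E_succ f g a b x0 (n + 1) x0 H Hx0).
          apply (sd_fi _ _ _ _ _ H); auto. apply (E_in01 f g a b x0); auto. lra. }
      rewrite (Hin _ _ Hf1), (Hin _ _ Hn).
      assert (Hq : E f g (- (n + 1)) (f y) = E f g (- n) y).
      { rewrite <- (E_f1 f g a b x0) by auto. rewrite <- (E_add f g a b x0) by auto.
        f_equal. ring. }
      rewrite Hq. apply (E_succ f' g' a' b' x0'); auto. apply Hm.
      apply (E_in01 f g a b x0); auto.
    + rewrite (sd_out f g a b x0 y) by (auto; lra). rewrite Hout by lra.
      rewrite (sd_out f' g' a' b' x0'); auto. apply (Hout' y); auto; lra.
    + rewrite (sd_out f g a b x0 y) by (auto; lra). rewrite Hout by lra.
      rewrite (sd_out f' g' a' b' x0'); auto. apply (Hout' y); auto; lra.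
Qed.

Definition relt (t u : triple) : Prop :=
  disj_int (sa t) (sb t) (sa u) (sb u) \/ seg_sub (sa t) (sb t) (ia u) (ib u) \/
  seg_sub (sa u) (sb u) (ia t) (ib t).

Lemma exists_max (I : Type) (L : I -> R) : forall (l : list I) (P : I -> Prop),
  (forall i, P i -> In i l) -> (exists i, P i) -> exists r, P r /\ forall k, P k -> L k <= L r.
Proof.
  induction l as [|a l IH]; intros P Hl [i Hi].
  - destruct (Hl i Hi).
  - destruct (classic (exists j, P j /\ j <> a)) as [[j [Hj Hja]]|Hno].
    + destruct (IH (fun j => P j /\ j <> a)) as [r [[Hr Hra] Hmax]].
      { intros k [Hk Hka]. destruct (Hl k Hk); [congruence|auto]. }
      { exists j; auto. }
      destruct (classic (P a)) as [Pa|nPa].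
      * destruct (Rle_lt_dec (L a) (L r)).
        -- exists r. split; auto. intros k Hk. destruct (classic (k = a)); [subst; auto|apply Hmax; auto].
        -- exists a. split; auto. intros k Hk. destruct (classic (k = a)); [subst; lra|].
           assert (Hq := Hmax k (conj Hk H)). lra.
      * exists r. split; auto. intros k Hk. destruct (classic (k = a)); [subst; contradiction|apply Hmax; auto].
    + assert (Hia : i = a) by (apply NNPP; intro; apply Hno; exists i; auto). subst.
      exists a. split; auto. intros k Hk.
      assert (k = a) by (apply NNPP; intro; apply Hno; exists k; auto). subst; lra.
Qed.

Lemma remove_one (I : Type) (r : I) : forall l, In r l ->
  exists l', (length l' < length l)%nat /\ forall x, In x l -> x <> r -> In x l'.
Proof.
  induction l as [|a l IH]; intros Hr; [destruct Hr|].
  destruct (classic (a = r)).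
  - exists l. split; [simpl; lia|]. intros x [Hx|Hx] Hxr; [congruence|auto].
  - destruct Hr as [Hr|Hr]; [congruence|]. destruct (IH Hr) as [l' [Hlen Hl']].
    exists (a :: l'). split; [simpl; lia|]. intros x [Hx|Hx] Hxr; [left; auto|right; auto].
Qed.

Lemma disj_point a b c d p : disj_int a b c d -> c < d -> a < p < b -> c <= p <= d -> False.
Proof.
  intros D Hcd Hp Hq. destruct (Rlt_le_dec p d).
  - apply (D (p + Rmin (b - p) (d - p) / 2)). unfold Rmin; destruct Rle_dec; lra.
  - apply (D (p - Rmin (p - a) (p - c) / 2)). unfold Rmin; destruct Rle_dec; lra.
Qed.

Lemma good_facts t : good_triple t ->
  sa t < ia t < ib t /\ ib t < sb t /\ in01 (sa t) /\ in01 (sb t) /\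
  ib t = tf t (ia t) /\ maps01 (tf t) /\
  (forall x, in01 x -> ~ (sa t < x < sb t) -> tf t x = x) /\
  (forall x, sa t < x < sb t -> sa t < tf t x < sb t).
Proof.
  intros Hg. destruct (good_SD t Hg) as [g H].
  destruct Hg as [_ [_ [_ [_ Hib]]]].
  destruct (sd_in01 _ _ _ _ _ H) as [Ha [Hb Hx]].
  destruct (sd_ab _ _ _ _ _ H) as [L1 [L2 [L3 L4]]].
  assert (Hf := sd_fab _ _ _ _ _ (ia t) H ltac:(lra)).
  assert (Hp := sd_pos _ _ _ _ _ H (ia t) L2 L3).
  rewrite Hib. split; [lra|]. split; [lra|]. split; [auto|]. split; [auto|].
  split; [auto|]. split; [apply (sd_fm _ _ _ _ _ H)|]. split.
  - intros x Hx' Hn. apply (sd_out _ _ _ _ _ x H); auto.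
  - intros x Hx'. apply (sd_fab _ _ _ _ _ x H); auto.
Qed.

Lemma core (I : Type) (S S' : I -> triple) (h : R -> R) :
  (forall i, good_triple (S i)) -> (forall i, good_triple (S' i)) ->
  (forall i j, i <> j -> relt (S i) (S j)) ->
  maps01 h -> incr01 h -> onto01 h ->
  (forall i, sa (S' i) = h (sa (S i)) /\ sb (S' i) = h (sb (S i)) /\
             ia (S' i) = h (ia (S i)) /\ ib (S' i) = h (ib (S i))) ->
  forall n (P : I -> Prop) (l : list I), (length l <= n)%nat -> (forall i, P i -> In i l) ->
  exists ht, maps01 ht /\ incr01 ht /\ onto01 ht /\
    (forall i, P i -> forall x, in01 x -> ht (tf (S i) x) = tf (S' i) (ht x)) /\
    (forall x, in01 x -> (forall i, P i -> ~ (sa (S i) < x < sb (S i))) -> ht x = h x).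
Proof.
  intros HG HG' Hrel Hm Hi Ho Hend.
  induction n as [|n IHn]; intros P l Hlen Hl.
  - exists h. split; [auto|]. split; [auto|]. split; [auto|]. split; [|auto].
    intros i Hp. destruct l; [destruct (Hl i Hp)|simpl in Hlen; lia].
  - destruct (classic (exists i, P i)) as [Hex|Hno].
    2: { exists h. split; [auto|]. split; [auto|]. split; [auto|]. split; [|auto].
         intros i Hp; exfalso; apply Hno; eauto. }
    destruct (exists_max I (fun i => sb (S i) - sa (S i)) l P Hl Hex) as [r [Pr Hmax]].
    destruct (remove_one I r l (Hl r Pr)) as [l' [Hlen' Hl']].
    destruct (IHn (fun k => P k /\ k <> r) l') as [ht0 [Hm0 [Hi0 [Ho0 [Hc0 Hh0]]]]].
    { lia. }
    { intros k [Pk Hk]. apply Hl'; auto. }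
    destruct (good_SD (S r) (HG r)) as [g Hsd].
    destruct (good_SD (S' r) (HG' r)) as [g' Hsd'].
    destruct (good_facts (S r) (HG r)) as [R1 [R2 [R3 [R4 [R5 [R6 [R7 R8]]]]]]].
    destruct (good_facts (S' r) (HG' r)) as [R1' [R2' [R3' [R4' [R5' [R6' [R7' R8']]]]]]].
    destruct (Hend r) as [Ea [Eb [Ei Ej]]].
    assert (Hk : forall k, P k -> k <> r ->
       disj_int (sa (S k)) (sb (S k)) (sa (S r)) (sb (S r)) \/
       (ia (S r) <= sa (S k) /\ sb (S k) <= ib (S r))).
    { intros k Pk Hkr.
      destruct (good_facts (S k) (HG k)) as [K1 [K2 [K3 [K4 [K5 [K6 [K7 K8]]]]]]].
      destruct (Hrel k r Hkr) as [D|[D|D]].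
      - left; auto.
      - right. assert (Q1 := D (sa (S k)) ltac:(unfold seg; lra)).
        assert (Q2 := D (sb (S k)) ltac:(unfold seg; lra)). unfold seg in *. lra.
      - exfalso. assert (Q1 := D (sa (S r)) ltac:(unfold seg; lra)).
        assert (Q2 := D (sb (S r)) ltac:(unfold seg; lra)). unfold seg in *.
        assert (Q3 := Hmax k Pk). simpl in Q3. lra. }
    assert (Hpt : forall p, in01 p -> sa (S r) <= p <= sb (S r) ->
              (p <= ia (S r) \/ ib (S r) <= p) -> ht0 p = h p).
    { intros p Hp H1 H2. apply Hh0; auto. intros k [Pk Hkr] Hin.
      destruct (Hk k Pk Hkr) as [D|[D1 D2]].
      - apply (disj_point _ _ _ _ p D); lra.
      - lra. }
    assert (Hin01 : forall p, sa (S r) <= p <= sb (S r) -> in01 p).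
    { intros p Hp. unfold in01 in *. lra. }
    destruct (extend (tf (S r)) g (sa (S r)) (sb (S r)) (ia (S r))
                     (tf (S' r)) g' (sa (S' r)) (sb (S' r)) (ia (S' r)) ht0
                     Hsd Hsd' Hm0 Hi0 Ho0) as [ht [Hm1 [Hi1 [Ho1 [Hout [Hdom Hconj]]]]]].
    { rewrite Hpt; auto; lra. }
    { rewrite Hpt; auto; lra. }
    { rewrite Hpt; try apply Hin01; auto; lra. }
    { rewrite <- R5, <- R5', Hpt; try apply Hin01; auto; lra. }
    assert (Va : ht (sa (S r)) = sa (S' r)).
    { rewrite Hout; auto; [|lra]. rewrite Hpt; auto; lra. }
    assert (Vb : ht (sb (S r)) = sb (S' r)).
    { rewrite Hout; auto; [|lra]. rewrite Hpt; auto; lra. }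
    assert (Vi : ht (ia (S r)) = ia (S' r)).
    { rewrite Hdom; [|rewrite <- R5; lra]. rewrite Hpt; try apply Hin01; auto; lra. }
    assert (Vj : ht (ib (S r)) = ib (S' r)).
    { rewrite R5, Hconj, Vi, R5'; auto. apply Hin01; lra. }
    exists ht. split; [auto|]. split; [auto|]. split; [auto|]. split.
    + intros k Pk x Hx. destruct (classic (k = r)) as [->|Hkr]; [apply Hconj; auto|].
      destruct (good_facts (S k) (HG k)) as [K1 [K2 [K3 [K4 [K5 [K6 [K7 K8]]]]]]].
      destruct (good_facts (S' k) (HG' k)) as [K1' [K2' [K3' [K4' [K5' [K6' [K7' K8']]]]]]].
      destruct (Hend k) as [Fa [Fb [Fi Fj]]].
      assert (Hc := Hc0 k (conj Pk Hkr)).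
      assert (Hhx := Hm1 x Hx).
      destruct (Hk k Pk Hkr) as [D|[D1 D2]].
      * assert (D' : forall z, ~ (sa (S' k) < z < sb (S' k) /\ sa (S' r) < z < sb (S' r))).
        { intros z [Z1 Z2]. assert (Hz : in01 z) by (unfold in01 in *; lra).
          destruct (Ho z Hz) as [w [Hw <-]].
          apply (D w). rewrite Fa, Fb, Ea, Eb in *.
          repeat split; apply (incr01_lt_rev h); auto; lra. }
        destruct (Rlt_dec (sa (S r)) x); [destruct (Rlt_dec x (sb (S r)))|].
        -- rewrite (K7 x Hx) by (intro Hq; apply (D x); lra).
           assert (ht (sa (S r)) < ht x) by (apply Hi1; auto).
           assert (ht x < ht (sb (S r))) by (apply Hi1; auto).
           rewrite K7'; auto. intro Hq. apply (D' (ht x)). lra.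
        -- assert (Hfx : ~ (sa (S r) < tf (S k) x < sb (S r))).
           { destruct (classic (sa (S k) < x < sb (S k))) as [Hq|Hq].
             - intro Hq2. apply (D (tf (S k) x)). split; auto.
             - rewrite K7; auto. lra. }
           rewrite !Hout; auto; lra.
        -- assert (Hfx : ~ (sa (S r) < tf (S k) x < sb (S r))).
           { destruct (classic (sa (S k) < x < sb (S k))) as [Hq|Hq].
             - intro Hq2. apply (D (tf (S k) x)). split; auto.
             - rewrite K7; auto. lra. }
           rewrite !Hout; auto; lra.
      * assert (D1' : ia (S' r) <= sa (S' k)).
        { rewrite Fa, Ei. apply incr01_le; auto. unfold in01 in *; lra. }
        assert (D2' : sb (S' k) <= ib (S' r)).
        { rewrite Fb, Ej. apply incr01_le; auto. unfold in01 in *; lra. }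
        destruct (classic (ia (S r) <= x < ib (S r))) as [Hx1|Hx1].
        -- assert (Hfx : ia (S r) <= tf (S k) x < ib (S r)).
           { destruct (classic (sa (S k) < x < sb (S k))) as [Hq|Hq].
             - assert (Hq' := K8 x Hq). lra.
             - rewrite K7; auto. }
           rewrite !Hdom; try (rewrite <- R5; lra). auto.
        -- rewrite K7 by (auto; lra). rewrite K7'; auto.
           destruct (Rlt_le_dec x (ia (S r))).
           ++ assert (ht x < ht (ia (S r))) by (apply Hi1; auto; apply Hin01; lra). lra.
           ++ assert (ht (ib (S r)) <= ht x) by (apply incr01_le; auto; try apply Hin01; lra). lra.
    + intros x Hx Hno. rewrite Hout; [|auto|apply Hno; auto].
      apply Hh0; auto. intros k [Pk _]. apply Hno; auto.
Qed.

Lemma seg_image (h : R -> R) a b a' b' : incr01 h -> in01 a -> in01 b -> a <= b -> a' <= b' ->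
  (forall y, seg a' b' y <-> image_seg h a b y) -> a' = h a /\ b' = h b.
Proof.
  intros Hi Ha Hb Hab Hab' Heq.
  destruct (proj1 (Heq a') ltac:(unfold seg; lra)) as [x1 [Hx1 E1]].
  destruct (proj1 (Heq b') ltac:(unfold seg; lra)) as [x2 [Hx2 E2]].
  assert (Q1 := proj2 (Heq (h a)) ltac:(exists a; unfold seg; split; [lra|auto])).
  assert (Q2 := proj2 (Heq (h b)) ltac:(exists b; unfold seg; split; [lra|auto])).
  unfold seg in *.
  assert (h a <= h x1) by (apply incr01_le; auto; unfold in01 in *; lra).
  assert (h x2 <= h b) by (apply incr01_le; auto; unfold in01 in *; lra).
  split; lra.
Qed.

Lemma gen_in01 {Idx : Type} (F : Idx -> R -> R) g : gen F g ->
  (forall i x, in01 x -> in01 (F i x)) -> forall x, in01 x -> in01 (g x).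
Proof.
  intros Hg HF. induction Hg; intros x Hx; auto.
  - rewrite <- H; auto.
  - apply H; auto.
Qed.

Theorem mainTheorem20 (I J : Type) (S : I -> triple) (Sigma : J -> triple)
  (HIfin : finite_type I) (HJfin : finite_type J)
  (HS : fund_system S) (HSigma : fund_system Sigma)
  (h : R -> R) (Hh : or_pres_homeo01 h)
  (phi : I -> J) (Hphi : bijective_map phi)
  (HSupp : forall i y, seg (sa (Sigma (phi i))) (sb (Sigma (phi i))) y
                        <-> image_seg h (sa (S i)) (sb (S i)) y)
  (HDom : forall i y, seg (ia (Sigma (phi i))) (ib (Sigma (phi i))) y
                        <-> image_seg h (ia (S i)) (ib (S i)) y) :
  exists ht : R -> R, homeo01 ht /\
    (forall i x, in01 x -> ht (tf (S i) x) = tf (Sigma (phi i)) (ht x)) /\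
    (forall g', gen (fun j => tf (Sigma j)) g' <->
       exists g, gen (fun i => tf (S i)) g /\
         forall x, in01 x -> ht (g x) = g' (ht x)).
Proof.
  destruct Hh as [[Hm [_ [hg [Hgm [_ [_ Hhg]]]]]] Hi].
  assert (Ho : onto01 h) by (intros w Hw; exists (hg w); split; auto).
  destruct HS as [HG Hrel]. destruct HSigma as [HG' _].
  destruct HIfin as [l Hl].
  assert (Hend : forall i, sa (Sigma (phi i)) = h (sa (S i)) /\ sb (Sigma (phi i)) = h (sb (S i)) /\
             ia (Sigma (phi i)) = h (ia (S i)) /\ ib (Sigma (phi i)) = h (ib (S i))).
  { intros i.
    destruct (good_facts (S i) (HG i)) as [K1 [K2 [K3 [K4 _]]]].
    destruct (good_facts (Sigma (phi i)) (HG' (phi i))) as [K1' [K2' [K3' [K4' _]]]].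
    destruct (seg_image h (sa (S i)) (sb (S i)) (sa (Sigma (phi i))) (sb (Sigma (phi i))) Hi K3 K4 ltac:(lra) ltac:(lra) (HSupp i)).
    destruct (seg_image h (ia (S i)) (ib (S i)) (ia (Sigma (phi i))) (ib (Sigma (phi i))) Hi ltac:(unfold in01 in *; lra)
                ltac:(unfold in01 in *; lra) ltac:(lra) ltac:(lra) (HDom i)).
    auto. }
  destruct (core I S (fun i => Sigma (phi i)) h HG (fun i => HG' (phi i)) Hrel Hm Hi Ho Hend
              (length l) (fun _ => True) l (le_n _) (fun i _ => Hl i))
    as [ht [Hm1 [Hi1 [Ho1 [Hc _]]]]].
  assert (Hhom := incr_homeo ht Hi1 Hm1 Ho1).
  exists ht. split; [auto|].
  assert (C : forall i x, in01 x -> ht (tf (S i) x) = tf (Sigma (phi i)) (ht x))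
    by (intros; apply Hc; auto).
  split; [auto|].
  destruct Hhom as [_ [_ [hi [Him [_ [Hhi Hih]]]]]].
  assert (HFm : forall i x, in01 x -> in01 (tf (S i) x)).
  { intros i. destruct (good_facts (S i) (HG i)) as [_ [_ [_ [_ [_ [Q _]]]]]]. exact Q. }
  assert (HFm' : forall j x, in01 x -> in01 (tf (Sigma j) x)).
  { intros j. destruct (good_facts (Sigma j) (HG' j)) as [_ [_ [_ [_ [_ [Q _]]]]]]. exact Q. }
  destruct Hphi as [_ Hsurj].
  intro g'. split.
  - intro Hg'. induction Hg' as [|g0 g1 Hg0 IH Heq|j g0 Hg0 IH|j g0 g1 Hg0 IH Hinv].
    + exists (fun x => x). split; [constructor|auto].
    + destruct IH as [g [Hg Hcg]]. exists g. split; auto. intros x Hx.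
      rewrite Hcg by auto. apply Heq; auto.
    + destruct (Hsurj j) as [i <-]. destruct IH as [g [Hg Hcg]].
      exists (fun x => tf (S i) (g x)). split; [apply (gen_mul (fun i => tf (S i)) i g); auto|].
      intros x Hx. rewrite C by (apply (gen_in01 _ g Hg); auto). rewrite Hcg; auto.
    + destruct (Hsurj j) as [i <-]. destruct IH as [g [Hg Hcg]].
      exists (fun x => hi (g1 (ht x))). split.
      * apply (gen_inv (fun i => tf (S i)) i g); auto. intros x Hx.
        destruct (Hinv (ht x) (Hm1 x Hx)) as [W1 W2].
        split; [apply Him; auto|].
        rewrite <- (Hhi (tf (S i) (hi (g1 (ht x))))) by (apply HFm; apply Him; auto).
        rewrite C by (apply Him; auto). rewrite Hih by auto. rewrite W2.
        rewrite <- Hcg by auto. apply Hhi. apply (gen_in01 _ g Hg); auto.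
      * intros x Hx. apply Hih. apply Hinv. auto.
  - intros [g [Hg Hcg]]. revert g' Hcg.
    induction Hg as [|g0 g1 Hg0 IH Heq|i g0 Hg0 IH|i g0 g1 Hg0 IH Hinv]; intros g'' Hcg.
    + apply gen_ext with (g := fun x => x); [constructor|].
      intros w Hw. rewrite <- (Hih w) by auto. apply Hcg. apply Him; auto.
    + apply IH. intros x Hx. rewrite Heq; auto.
    + assert (IH' := IH (fun w => ht (g0 (hi w)))).
      apply gen_ext with (g := fun w => tf (Sigma (phi i)) (ht (g0 (hi w)))).
      * apply (gen_mul (fun j => tf (Sigma j)) (phi i) (fun w => ht (g0 (hi w)))). apply IH'. intros x Hx. rewrite Hhi; auto.
      * intros w Hw. rewrite <- C by (apply (gen_in01 _ g0 Hg0); auto).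
        rewrite Hcg by auto. rewrite Hih; auto.
    + assert (IH' := IH (fun w => ht (g0 (hi w)))).
      apply (gen_inv (fun j => tf (Sigma j)) (phi i) (fun w => ht (g0 (hi w)))).
      * apply IH'. intros x Hx. rewrite Hhi; auto.
      * intros w Hw. assert (Hq := Hcg (hi w) (Him w Hw)). rewrite Hih in Hq by auto.
        rewrite <- Hq. destruct (Hinv (hi w) (Him w Hw)) as [W1 W2].
        split; auto. rewrite <- C by auto. rewrite W2. auto.
Qed.
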